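(* For every graph $G$ on $n$ vertices, $G$ can be turned into a word-representable graph on the same vertex set by adding or deleting at most $\min\{|E(G)|/3,\ \binom n2-|E(G)|\}$ edges; that is, $\binom n2\,\mathrm{dist}(G,\mathcal H_{\rm word})\le\min\{|E(G)|/3,\binom n2-|E(G)|\}$. In particular $\mathrm{dist}(G,\mathcal H_{\rm word})\le 1/4$.
   Context: A word over alphabet $V$ represents a graph $G=(V,E)$ if for all distinct $x,y\in V$: $xy\in E$ iff the occurrences of $x$ and $y$ alternate in the word; $\mathcal H_{\rm word}$ is the class of graphs admitting such a word. For graphs $G,H$ on the same $n$-vertex set, $\mathrm{dist}(G,H)=|E(G)\triangle E(H)|/\binom n2$ and $\mathrm{dist}(G,\mathcal H)=\min\{\mathrm{dist}(G,H):H\in\mathcal H, V(H)=V(G)\}$. *)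

(* Defs.v *)
From HB Require Import structures.
From mathcomp Require Import all_boot all_order all_algebra.
Set Implicit Arguments. Unset Strict Implicit. Unset Printing Implicit Defensive.
Import Order.TTheory GRing.Theory Num.Theory.

Definition simple_graph (V : finType) (E : {set {set V}}) : Prop :=
  forall e, e \in E -> #|e| = 2.

Definition alternate (V : finType) (w : seq V) (x y : V) : bool :=
  sorted (fun a b : V => a != b) [seq z <- w | (z == x) || (z == y)].

Definition represents (V : finType) (w : seq V) (E : {set {set V}}) : Prop :=
  (forall x : V, x \in w) /\
  (forall x y : V, x != y -> ([set x; y] \in E) = alternate w x y).

Definition word_representable (V : finType) (E : {set {set V}}) : Prop :=
  simple_graph E /\ exists w : seq V, represents w E.

Definition symdiff (T : finType) (A B : {set T}) : {set T} := (A :\: B) :|: (B :\: A).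

(* Main.v *)
Require Import Defs.
From mathcomp Require Import all_boot all_order all_algebra.
From mathcomp Require Import zify lra.
From Stdlib Require Import Lia.
Set Implicit Arguments. Unset Strict Implicit. Unset Printing Implicit Defensive.
Import Order.TTheory GRing.Theory Num.Theory.
Section Word.
Variable V : finType.

Definition Ordq (k : V -> nat) (q : pred V) : seq V :=
  flatten [seq [seq w <- enum V | q w && (k w == i)] | i <- iota 0 6].

Lemma filter_pred1b (s : seq V) x (b : bool) : uniq s -> x \in s ->
  [seq w <- s | (w == x) && b] = if b then [:: x] else [::].
Proof.
move=> us xs; case: b.
  by rewrite (eq_filter (a2 := pred1 x)) ?filter_pred1_uniq // => w; rewrite andbT.
by rewrite (eq_filter (a2 := pred0)) ?filter_pred0 // => w; rewrite andbF.
Qed.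

Lemma filter_level (k : V -> nat) q x y i : k x != k y ->
  [seq z <- [seq w <- enum V | q w && (k w == i)] | (z == x) || (z == y)] =
  (if q x && (k x == i) then [:: x] else [::]) ++ (if q y && (k y == i) then [:: y] else [::]).
Proof.
move=> nxy; rewrite -filter_predI.
have [exi|nxi] := eqVneq (k x) i.
  have nyi : k y != i by rewrite -exi eq_sym.
  rewrite (negbTE nyi) andbF cats0 andbT.
  rewrite (eq_filter (a2 := fun w => (w == x) && q x)); first by rewrite filter_pred1b ?enum_uniq ?mem_enum.
  move=> w /=; have [->|nwx] := eqVneq w x; first by rewrite exi eqxx andbT.
  have [->|nwy] := eqVneq w y; by rewrite /= ?(negbTE nyi) ?andbF.
rewrite andbF /=.
rewrite (eq_filter (a2 := fun w => (w == y) && (q y && (k y == i)))); first by rewrite filter_pred1b ?enum_uniq ?mem_enum.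
move=> w /=; have [->|nwy] := eqVneq w y; first by rewrite orbT.
have [->|nwx] := eqVneq w x; by rewrite /= ?(negbTE nxi) ?andbF.
Qed.

Lemma filter_Ordq (k : V -> nat) q x y : k x < k y -> k y < 6 ->
  [seq z <- Ordq k q | (z == x) || (z == y)] =
  (if q x then [:: x] else [::]) ++ (if q y then [:: y] else [::]).
Proof.
move=> lxy ly6; rewrite /Ordq filter_flatten -map_comp.
rewrite (eq_map (g := fun i => (if q x && (k x == i) then [:: x] else [::]) ++ (if q y && (k y == i) then [:: y] else [::]))); last first.
  by move=> i /=; rewrite filter_level // ltn_eqF.
move: lxy ly6; case: (k x) => [|[|[|[|[|[|a]]]]]]; case: (k y) => [|[|[|[|[|[|b]]]]]] //= _ _;
  by rewrite ?andbT ?andbF /= ?cats0; case: (q x); case: (q y).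
Qed.

Lemma mem_Ordq (k : V -> nat) q w : (w \in Ordq k q) = q w && (k w < 6).
Proof.
apply/flatten_mapP/idP => [[i]|/andP[qw kw]].
  by rewrite mem_iota mem_filter => /andP[_ ki] /andP[/andP[-> /eqP ->] _].
by exists (k w); rewrite ?mem_iota // mem_filter qw eqxx mem_enum.
Qed.


Definition ne (a b : V) := a != b.

Definition goodp (x y : V) (l : seq V) :=
  if l is a :: t then (a == x) && (last a t == y) && sorted (fun a b : V => a != b) l else true.

Lemma good_cat x y l1 l2 : x != y -> goodp x y l1 -> goodp x y l2 -> goodp x y (l1 ++ l2).
Proof.
move=> nxy; case: l1 => [//|a t] /= /andP[/andP[/eqP -> /eqP ly] st].
case: l2 => [|b u]; first by rewrite cats0 /= eqxx ly eqxx.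
move=> /= /andP[/andP[/eqP -> /eqP lu] su].
rewrite eqxx last_cat /= lu eqxx /=.
rewrite cat_path st /= ly eq_sym nxy; exact: su.
Qed.

Lemma good_flatten x y L : x != y -> all (goodp x y) L -> goodp x y (flatten L).
Proof.
move=> nxy; elim: L => [//|l L IH] /= /andP[gl gL]; exact: good_cat nxy gl (IH gL).
Qed.

Lemma good_sorted x y l : goodp x y l -> sorted (fun a b : V => a != b) l.
Proof. by case: l => [//|a t] /= /andP[_ ->]. Qed.

Lemma sorted_flatten_mem (L : seq (seq V)) l :
  sorted (fun a b : V => a != b) (flatten L) -> l \in L -> sorted (fun a b : V => a != b) l.
Proof.
elim: L => [//|l' L IH] /= s; rewrite inE => /orP[/eqP ->|lL].
  exact: (cat_sorted2 s).1.
exact: IH (cat_sorted2 s).2 lL.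
Qed.

Lemma alt_sym (w : seq V) x y : alternate w x y = alternate w y x.
Proof. by rewrite /alternate (eq_filter (a2 := fun z => (z == y) || (z == x))) // => z; rewrite orbC. Qed.

Section Col.
Variable col : V -> nat.
Variable H : {set {set V}}.
Hypothesis hcol : forall v, col v < 3.
Hypothesis hadj : forall x y, x != y -> [set x; y] \in H -> col x != col y.

Definition adj x y := [set x; y] \in H.
Definition arc x y := (col x < col y) && adj x y.
Definition Dv (v : V) : pred V := fun u => (u == v) || arc u v || [exists w, arc u w && arc w v].
Definition kap v w := (if Dv v w then 0 else 3) + col w.
Definition Rv v := Ordq (kap v) predT.
Definition special x y := (col x == 0) && (col y == 2) && ~~ adj x y.
Definition seg x y := Ordq col (predC1 y) ++ [:: x; y] ++ Ordq col (predC1 x).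
Definition piece x y := Rv x ++ Rv y ++ (if special x y then seg x y else [::]).
Definition word := flatten [seq piece x y | x <- enum V, y <- enum V].

Lemma adjC x y : adj x y = adj y x.
Proof. by rewrite /adj setUC. Qed.

Lemma Dv_closed u x y : arc x y -> Dv u y -> Dv u x.
Proof.
move=> axy; rewrite /Dv => /orP[/orP[/eqP eyu|ayu]|/existsP[w /andP[ayw awu]]].
- by rewrite -eyu axy orbT.
- by apply/orP; right; apply/existsP; exists y; rewrite axy ayu.
- move: axy ayw awu (hcol u); rewrite /arc => /andP[a1 _] /andP[a2 _] /andP[a3 _].
  lia.
Qed.

Lemma kap_lt6 v w : kap v w < 6.
Proof. by rewrite /kap; have := hcol w; case: (Dv v w); lia. Qed.

Lemma filter_Rv_arc u x y : arc x y ->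
  [seq z <- Rv u | (z == x) || (z == y)] = [:: x; y].
Proof.
move=> axy; rewrite /Rv filter_Ordq ?kap_lt6 //.
move: (Dv_closed (u:=u) axy) (axy) (hcol x) (hcol y); rewrite /kap /arc.
case: (Dv u y); case: (Dv u x) => //=; try (by move=> /(_ isT)); move=> _ /andP[]; lia.
Qed.


Lemma filter_seg_arc u v x y : special u v -> arc x y ->
  goodp x y [seq z <- seg u v | (z == x) || (z == y)].
Proof.
rewrite /special => /andP[/andP[/eqP cu /eqP cv] nauv] axy.
have := axy; rewrite /arc => /andP[lxy axy'].
have hx := hcol x; have hy := hcol y.
have xv : x != v by apply/eqP => exv; move: lxy hy; rewrite exv cv; lia.
have yu : y != u by apply/eqP => eyu; move: lxy; rewrite eyu cu.
have nxy : x != y by apply/eqP => e; move: lxy; rewrite e ltnn.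
rewrite /seg filter_cat (filter_cat _ [:: u; v]) !filter_Ordq //; try lia.
rewrite /= xv yu /=.
have [exu|nxu] := eqVneq x u.
  have yv : y != v by apply/eqP => eyv; move: nauv; rewrite -exu -eyv axy'.
  rewrite yv -exu eqxx /= (eq_sym v x) (negbTE xv) (eq_sym v y) (negbTE yv) /=.
  by rewrite /= ?eqxx /= ?nxy ?(eq_sym y x) ?nxy.
rewrite (eq_sym u y) (negbTE yu) /=.
have [eyv|nyv] := eqVneq y v.
  by rewrite -eyv eqxx orbT /= ?eqxx /= ?nxy ?(eq_sym y x) ?nxy.
rewrite ?(eq_sym v x) ?(negbTE xv) ?(eq_sym v y) ?(negbTE nyv) /=.
by rewrite /= ?eqxx /= ?nxy ?(eq_sym y x) ?nxy.
Qed.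


Lemma edge_good x y : arc x y -> goodp x y [seq z <- word | (z == x) || (z == y)].
Proof.
move=> axy.
have nxy : x != y by apply/eqP => e; move: axy; rewrite /arc e ltnn.
rewrite /word filter_flatten; apply: good_flatten => //.
apply/allP => l /mapP[l' /allpairsP[[u v] [_ _ ->]] ->] /=.
rewrite /piece filter_cat (filter_cat _ (Rv v)) !filter_Rv_arc //.
apply: good_cat => //; first by rewrite /= eqxx /= eqxx /= nxy.
apply: good_cat => //; first by rewrite /= eqxx /= eqxx /= nxy.
case: ifP => sp; last by [].
exact: filter_seg_arc.
Qed.

Lemma seg_bad x y : col x = 0 -> col y = 2 -> x != y ->
  ~~ sorted (fun a b : V => a != b) [seq z <- seg x y | (z == x) || (z == y)].
Proof.
move=> cx cy nxy.
rewrite /seg filter_cat (filter_cat _ [:: x; y]) !filter_Ordq ?cx ?cy //=.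
by rewrite nxy !eqxx /= !orbT /= eqxx.
Qed.

Lemma sorted_piece_seg x y : special x y ->
  sorted (fun a b : V => a != b) [seq z <- piece x y | (z == x) || (z == y)] ->
  sorted (fun a b : V => a != b) [seq z <- seg x y | (z == x) || (z == y)].
Proof.
move=> sp; rewrite /piece sp filter_cat (filter_cat _ (Rv y)) => s.
exact: (cat_sorted2 (cat_sorted2 s).2).2.
Qed.

Lemma word_piece x y : piece x y \in [seq piece u v | u <- enum V, v <- enum V].
Proof. by apply: allpairs_f; rewrite mem_enum. Qed.

Lemma alt_piece x y : alternate word x y ->
  sorted (fun a b : V => a != b) [seq z <- piece x y | (z == x) || (z == y)].
Proof.
rewrite /alternate /word filter_flatten => s.
apply: sorted_flatten_mem s _; apply/mapP; exists (piece x y) => //.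
exact: word_piece.
Qed.

Lemma special_of x y : x != y -> ~~ adj x y -> Dv y x -> special x y.
Proof.
move=> nxy nadj.
rewrite /Dv => /orP[/orP[/eqP e|axy]|/existsP[w /andP[a1 a2]]]; first by rewrite e eqxx in nxy.
  by move: axy nadj; rewrite /arc => /andP[_ ->].
move: a1 a2 (hcol y); rewrite /special nadj /arc => /andP[l1 _] /andP[l2 _] h.
apply/andP; split => //; apply/andP; split; apply/eqP; lia.
Qed.

Lemma bad_special x y : special x y -> ~~ alternate word x y.
Proof.
move=> sp; apply/negP => /alt_piece /(sorted_piece_seg sp).
move: sp; rewrite /special => /andP[/andP[/eqP cx /eqP cy] _].
have nxy : x != y by apply/eqP => e; move: cx; rewrite e cy.
by apply/negP; apply: seg_bad.
Qed.

Lemma nonedge_bad x y : x != y -> ~~ adj x y -> ~~ alternate word x y.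
Proof.
move=> nxy nadj.
case Dyx: (Dv y x); first exact: bad_special (special_of nxy nadj Dyx).
case Dxy: (Dv x y).
  rewrite alt_sym; apply: bad_special; apply: special_of => //; first by rewrite eq_sym.
  by rewrite adjC.
apply/negP => /alt_piece; rewrite /piece filter_cat (filter_cat _ (Rv y)) catA => /cat_sorted2 [].
rewrite /Rv filter_Ordq ?kap_lt6 //; last first.
  by rewrite /kap Dxy /Dv eqxx /=; have := hcol x; have := hcol y; lia.
rewrite (eq_filter (a2 := fun z => (z == y) || (z == x))); last by move=> z; rewrite orbC.
rewrite filter_Ordq ?kap_lt6 //; last first.
  by rewrite /kap Dyx /Dv eqxx /=; have := hcol x; have := hcol y; lia.
by rewrite /= eqxx andbF.
Qed.


Lemma word_represents : represents word H.
Proof.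
split.
  move=> x; rewrite /word; apply/flattenP; exists (piece x x); first exact: word_piece.
  by rewrite /piece mem_cat /Rv mem_Ordq kap_lt6.
move=> x y nxy.
case axy: ([set x; y] \in H); last first.
  by apply/esym/negbTE; apply: nonedge_bad => //; rewrite /adj axy.
apply/esym; have := hadj nxy axy; rewrite neq_ltn => /orP[l|l].
  by apply: good_sorted (edge_good _); rewrite /arc l /adj axy.
rewrite alt_sym; apply: good_sorted (edge_good _).
by rewrite /arc l /adj setUC axy.
Qed.

End Col.
End Word.

Section Colr.
Variable V : finType.

Definition bich (f : {ffun V -> 'I_3}) (e : {set V}) :=
  [forall u in e, forall v in e, (u != v) ==> (f u != f v)].

Lemma bich2 f x y : x != y -> bich f [set x; y] = (f x != f y).
Proof.
move=> nxy; apply/forall_inP/idP => [h|nf u /set2P hu].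
  by have /forall_inP/(_ y (set22 x y)) := h x (set21 x y); rewrite nxy.
apply/forall_inP => v /set2P hv; apply/implyP.
by case: hu => ->; case: hv => ->; rewrite ?eqxx // => _; rewrite eq_sym.
Qed.

Lemma card_sum (T : finType) (P : pred T) : #|[set x | P x]| = \sum_x (P x : nat).
Proof.
rewrite -sum1_card big_mkcond /=; apply: eq_bigr => x _; rewrite inE; by case: (P x).
Qed.

Lemma count_edge x y : x != y ->
  3 * #|[set f : {ffun V -> 'I_3} | f x == f y]| <= #|{ffun V -> 'I_3}|.
Proof.
move=> nxy.
set T0 := [set f : {ffun V -> 'I_3} | f x == f y].
pose g (p : 'I_3 * {ffun V -> 'I_3}) : {ffun V -> 'I_3} :=
  [ffun v => if v == y then (p.2 v + p.1)%R else p.2 v].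
rewrite [X in X * _](_ : _ = #|[set: 'I_3]|); last by rewrite cardsT card_ord.
rewrite -cardsX -(card_in_imset (f := g)); first exact: max_card.
move=> [k1 f1] [k2 f2]; rewrite !inE /= => h1 h2 e.
have ex := congr1 (fun h : {ffun V -> 'I_3} => h x) e.
have ey := congr1 (fun h : {ffun V -> 'I_3} => h y) e.
move: ex ey; rewrite /g !ffunE eqxx (negbTE nxy) /= => ex ey.
move: h1 h2 => /eqP h1 /eqP h2.
have ek : k1 = k2 by apply: (addrI (f1 y)); rewrite -{2}h1 ex h2.
congr pair => //; apply/ffunP => v.
have := congr1 (fun h : {ffun V -> 'I_3} => h v) e; rewrite /g !ffunE /=.
by case: (v == y) => //; rewrite ek => /addIr.
Qed.

Lemma exists_coloring (E : {set {set V}}) : simple_graph E ->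
  exists f : {ffun V -> 'I_3}, 3 * #|[set e in E | ~~ bich f e]| <= #|E|.
Proof.
move=> sE.
pose m f := \sum_(e in E) (~~ bich f e : nat).
have mE f : #|[set e in E | ~~ bich f e]| = m f.
  rewrite -sum1_card big_mkcond /= /m [RHS]big_mkcond /=; apply: eq_bigr => e _.
  by rewrite !inE; case: (e \in E); case: (bich f e).
have Hsum : 3 * \sum_f m f <= #|E| * #|{ffun V -> 'I_3}|.
  rewrite /m exchange_big /= big_distrr /= -sum1_card big_distrl /=.
  apply: leq_sum => e eE.
  have /cards2P[x [y [nxy ->]]] : #|e| == 2 by rewrite sE.
  rewrite mul1n (_ : \sum_i _ = #|[set f : {ffun V -> 'I_3} | f x == f y]|) ?count_edge //.
  by rewrite card_sum; apply: eq_bigr => f _; rewrite bich2 // negbK.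
case: (pickP (fun f => 3 * m f <= #|E|)) => [f hf|none]; first by exists f; rewrite mE.
exfalso.
have h1 : \sum_(f : {ffun V -> 'I_3}) #|E|.+1 <= 3 * \sum_f m f.
  rewrite big_distrr /=; apply: leq_sum => f _; by rewrite ltnNge none.
have h2 : \sum_(f : {ffun V -> 'I_3}) #|E|.+1 = #|{ffun V -> 'I_3}| * #|E|.+1.
  by rewrite sum_nat_const.
rewrite h2 in h1.
have hF : 0 < #|{ffun V -> 'I_3}| by apply/card_gt0P; exists [ffun => ord0].
move: (leq_trans h1 Hsum) hF. nia.
Qed.
End Colr.

Lemma arith (d m C : nat) : 3 * d <= m -> d + m <= C -> 4 * d <= C ->
  (d%:Q <= Num.min (m%:Q / 3%:Q) (C%:Q - m%:Q))%R /\ (d%:Q / C%:Q <= 1%:Q / 4%:Q)%R.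
Proof.
move=> h1 h2 h3.
rewrite !pmulrn.
have h1' : (3%:R * d%:R <= m%:R :> rat)%R by rewrite -natrM ler_nat.
have h2' : (d%:R + m%:R <= C%:R :> rat)%R by rewrite -natrD ler_nat.
have h3' : (4%:R * d%:R <= C%:R :> rat)%R by rewrite -natrM ler_nat.
have hd : (0 <= d%:R :> rat)%R by rewrite ler0n.
split.
  rewrite le_min; apply/andP; split; lra.
have [C0|Cp] := eqVneq C 0.
  by rewrite C0 invr0 mulr0; lra.
rewrite ler_pdivrMr ?ltr0n ?lt0n //; lra.
Qed.

Lemma uniq_sorted_ne (V : finType) (s : seq V) : uniq s -> sorted (fun a b : V => a != b) s.
Proof.
elim: s => [//|a [|b t] IH] //= /andP[nin ut].
apply/andP; split; last exact: IH ut.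
by apply: contra nin => /eqP ->; rewrite inE eqxx.
Qed.

Lemma complete_wr (V : finType) : word_representable [set e : {set V} | #|e| == 2].
Proof.
split; first by move=> e; rewrite inE => /eqP.
exists (enum V); split; first by move=> x; rewrite mem_enum.
move=> x y nxy; rewrite inE cards2 nxy /=.
by apply/esym/uniq_sorted_ne; apply: filter_uniq; apply: enum_uniq.
Qed.

Theorem mainTheorem4 (V : finType) (E : {set {set V}}) :
  simple_graph E ->
  exists H : {set {set V}},
    word_representable H /\
    (#|symdiff E H|%:Q <= Num.min (#|E|%:Q / 3%:Q) ('C(#|V|, 2)%:Q - #|E|%:Q))%R /\
    (#|symdiff E H|%:Q / 'C(#|V|, 2)%:Q <= 1%:Q / 4%:Q)%R.
Proof.
move=> sE.
set K := [set e : {set V} | #|e| == 2].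
have EK : E \subset K by apply/subsetP => e eE; rewrite inE sE.
have cK : #|K| = 'C(#|V|, 2) by rewrite card_draws.
have mC : #|E| <= 'C(#|V|, 2) by rewrite -cK subset_leq_card.
have [f hf] := exists_coloring sE.
set Hf := [set e in E | bich f e].
have dHf : #|symdiff E Hf| = #|[set e in E | ~~ bich f e]|.
  rewrite (_ : symdiff E Hf = [set e in E | ~~ bich f e]) //; apply/setP => e; rewrite /symdiff !inE.
  by case: (e \in E); case: (bich f e).
case: (leqP (4 * #|E|) (3 * 'C(#|V|, 2))) => hm.
  exists Hf; split.
    split; first by move=> e; rewrite inE => /andP[eE _]; exact: sE eE.
    exists (word (fun v => nat_of_ord (f v)) Hf).
    apply: word_represents => [v|x y nxy]; first exact: ltn_ord.
    rewrite inE bich2 // => /andP[_ nf]; exact: nf.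
  rewrite dHf; apply: arith => //; move: hf hm; lia.
exists K; split; first exact: complete_wr.
have dK : #|symdiff E K| = 'C(#|V|, 2) - #|E|.
  rewrite (_ : symdiff E K = K :\: E); last first.
    apply/setP => e; rewrite /symdiff !inE.
    by case eE: (e \in E); rewrite /= ?andbF ?andbT //= sE // eqxx.
  by rewrite cardsD (setIidPr EK) cK.
rewrite dK; apply: arith; move: hm mC; lia.
Qed.
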